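(* Let $p(L,M,D;\mu\to1)$ be a generative reasoning model, let $\alpha\in L$, and let $\Delta\subseteq L$ be finite. Then $$p(\alpha\mid\Delta)=\frac{\sum_{m\in[\![\Delta]\!]_p^{\max}\cap[\![\alpha]\!]_p}p(m)}{\sum_{m\in[\![\Delta]\!]_p^{\max}}p(m)}.$$
   Context: Fix a multiset of data $\{d_1,\dots,d_K\}$ with $K\ge1$, and a propositional language $L$ over finitely many atoms, with set of models (truth assignments) $\mathcal M$. A function $m:\{d_1,\dots,d_K\}\to\mathcal M$ assigns to each datum the model it supports. The probability of a model $n$ is $p(n)=|\{k:m(d_k)=n\}|/K$. For $\mu\in(0,1)$ and $\alpha\in L$, set $p(\alpha\mid m)=\mu$ if $m$ satisfies $\alpha$ and $1-\mu$ otherwise. For finite $\Delta$, set $p(\Delta\mid m)=\prod_{\beta\in\Delta}p(\beta\mid m)$, which is $1$ for empty $\Delta$. In $p(L,M,D;\mu\to1)$, $$p(\alpha\mid\Delta)=\lim_{\mu\to1^-}\frac{\sum_{m}p(\alpha\mid m)p(\Delta\mid m)p(m)}{\sum_m p(\Delta\mid m)p(m)}.$$ Notation and definitions: - For $S\subseteq L$, $[\![S]\!]$ is the set of models satisfying every formula of $S$, $[\![\alpha]\!]=[\![\{\alpha\}]\!]$, and $[\![S]\!]_p=\{m\in[\![S]\!]:p(m)\neq0\}$. - $S\subseteq\Delta$ is a maximal possible subset of $\Delta$ if $[\![S]\!]_p\neq\emptyset$ and $[\![S\cup\{\beta\}]\!]_p=\emptyset$ for all $\beta\in\Delta\setminus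 S$. - $MPS(\Delta)$ is the set of maximal possible subsets of $\Delta$ of maximum cardinality. - $[\![\Delta]\!]_p^{\max}=\bigcup_{S\in MPS(\Delta)}[\![S]\!]_p$. *)

(* Defs.v *)
From HB Require Import structures.
From mathcomp Require Import all_boot all_order all_algebra.
From mathcomp Require Import finmap.
From mathcomp Require Import all_classical all_reals all_analysis.

Set Implicit Arguments.
Unset Strict Implicit.
Unset Printing Implicit Defensive.

Import Order.TTheory GRing.Theory Num.Theory.
Local Open Scope ring_scope.

Inductive prop (n : nat) : Type :=
| Atom of 'I_n
| Neg of prop n
| And of prop n & prop n
| Or of prop n & prop n
| Impl of prop n & prop n.

Arguments Atom {n}.

Section FormCount.
Variable n : nat.

Fixpoint form_enc (f : prop n) : GenTree.tree 'I_n :=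
  match f with
  | Atom a => GenTree.Leaf a
  | Neg g => GenTree.Node 0 [:: form_enc g]
  | And g h => GenTree.Node 1 [:: form_enc g; form_enc h]
  | Or g h => GenTree.Node 2 [:: form_enc g; form_enc h]
  | Impl g h => GenTree.Node 3 [:: form_enc g; form_enc h]
  end.

Fixpoint form_dec (t : GenTree.tree 'I_n) : option (prop n) :=
  match t with
  | GenTree.Leaf a => Some (Atom a)
  | GenTree.Node 0 [:: g] =>
      if form_dec g is Some g' then Some (Neg g') else None
  | GenTree.Node 1 [:: g; h] =>
      match form_dec g, form_dec h with Some g', Some h' => Some (And g' h') | _, _ => None end
  | GenTree.Node 2 [:: g; h] =>
      match form_dec g, form_dec h with Some g', Some h' => Some (Or g' h') | _, _ => None end
  | GenTree.Node 3 [:: g; h] =>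
      match form_dec g, form_dec h with Some g', Some h' => Some (Impl g' h') | _, _ => None end
  | _ => None
  end.

Lemma form_encK : pcancel form_enc form_dec.
Proof. by elim=> [a|g /= ->|g /= -> h ->|g /= -> h ->|g /= -> h ->]. Qed.

HB.instance Definition _ := Countable.copy (prop n) (pcan_type form_encK).
End FormCount.

Definition model (n : nat) := {ffun 'I_n -> bool}.

Fixpoint sat (n : nat) (w : model n) (f : prop n) : bool :=
  match f with
  | Atom a => w a
  | Neg g => ~~ sat w g
  | And g h => sat w g && sat w h
  | Or g h => sat w g || sat w h
  | Impl g h => sat w g ==> sat w h
  end.

Local Open Scope fset_scope.

Section GRM.
Variables (R : realType) (n K : nat).
(* the data are d_1..d_K, indexed by 'I_K; m k is the model supported by d_k *)
Variable m : 'I_K -> model n.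

Definition pmod (w : model n) : R := #|[set k | m k == w]|%:R / K%:R.

Definition pform (mu : R) (a : prop n) (w : model n) : R :=
  if sat w a then mu else 1 - mu.

Definition pset (mu : R) (D : {fset prop n}) (w : model n) : R :=
  \prod_(b <- D) pform mu b w.

(* the ratio whose limit mu -> 1^- defines p(alpha | Delta) *)
Definition pcond_mu (a : prop n) (D : {fset prop n}) (mu : R) : R :=
  (\sum_(w : model n) pform mu a w * pset mu D w * pmod w) /
  (\sum_(w : model n) pset mu D w * pmod w).

Definition in_semp (S : {fset prop n}) (w : model n) : Prop :=
  (forall b, b \in S -> sat w b) /\ pmod w != 0.

Definition max_possible (D S : {fset prop n}) : Prop :=
  S `<=` D /\ (exists w, in_semp S w) /\
  (forall b, b \in D -> b \notin S -> forall w, ~ in_semp (b |` S) w).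

Definition MPS (D S : {fset prop n}) : Prop :=
  max_possible D S /\ (forall S', max_possible D S' -> #|` S'| <= #|` S|)%N.

Definition in_semp_max (D : {fset prop n}) (w : model n) : Prop :=
  exists S, MPS D S /\ in_semp S w.

End GRM.

(* Main.v *)
Require Import Defs.
From HB Require Import structures.
From mathcomp Require Import all_boot all_order all_algebra.
From mathcomp Require Import finmap.
From mathcomp Require Import all_classical all_reals all_analysis.
From mathcomp Require Import ring lra zify.
Import Order.TTheory GRing.Theory Num.Theory.
Import numFieldNormedType.Exports.
Local Open Scope ring_scope.

Section Aux.
Variables (R : realType) (n K : nat) (m : 'I_K -> model n).
Hypothesis HK : (1 <= K)%N.
Variables (a : prop n) (D : {fset prop n}).

Local Notation pmod := (pmod R m).

Definition sc (w : model n) := count (sat w) D.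
Definition ec (w : model n) := count (predC (sat w)) D.
Definition Sw (w : model n) : {fset prop n} := [fset b in [seq b <- D | sat w b]]%fset.

Lemma card_Sw w : #|` Sw w| = sc w.
Proof. by rewrite card_fseq undup_id ?filter_uniq ?fset_uniq // size_filter. Qed.

Lemma mem_Sw w b : (b \in Sw w) = (b \in D) && sat w b.
Proof. by rewrite in_fset /= mem_filter andbC. Qed.

Lemma sc_ec w : (sc w + ec w)%N = #|` D|.
Proof. by rewrite /sc /ec count_predC. Qed.

Lemma pmod_ge0 w : 0 <= pmod w.
Proof. by rewrite /Defs.pmod divr_ge0 // ler0n. Qed.

Lemma pmod_w0 : pmod (m (Ordinal HK)) != 0.
Proof.
rewrite /Defs.pmod mulf_neq0 // ?invr_eq0 pnatr_eq0 -lt0n ?card_gt0 //.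
by apply/set0Pn; exists (Ordinal HK); rewrite inE.
Qed.

Lemma Pex : exists j, [exists w, (pmod w != 0) && (ec w == j)].
Proof. by exists (ec (m (Ordinal HK))); apply/existsP; exists (m (Ordinal HK)); rewrite pmod_w0 eqxx. Qed.

Definition E := ex_minn Pex.

Lemma Emin_le {w} : pmod w != 0 -> (E <= ec w)%N.
Proof.
rewrite /E; case: ex_minnP => j _ H pw; apply: H.
by apply/existsP; exists w; rewrite pw eqxx.
Qed.

Lemma Emin_ex : exists w, pmod w != 0 /\ ec w = E.
Proof.
rewrite /E; case: ex_minnP => j /existsP [w /andP [pw /eqP ew]] _.
by exists w.
Qed.


Lemma L1 {S w} : in_semp R m S w -> (S `<=` D)%fset -> (S `<=` Sw w)%fset.
Proof.
move=> [sS _] /fsubsetP SD; apply/fsubsetP => b bS.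
by rewrite mem_Sw SD // sS.
Qed.

Lemma L2 w : pmod w != 0 -> in_semp R m (Sw w) w.
Proof. by move=> pw; split => // b; rewrite mem_Sw => /andP []. Qed.

Lemma L3 S : max_possible R m D S -> (#|` S| <= #|` D| - E)%N.
Proof.
move=> [SD [[w wS] _]].
have := fsubset_leq_card (L1 wS SD); rewrite card_Sw.
have := Emin_le (proj2 wS); have := sc_ec w; lia.
Qed.

Lemma L4 {w} : pmod w != 0 -> ec w = E -> MPS R m D (Sw w).
Proof.
move=> pw ew.
have SD : (Sw w `<=` D)%fset by apply/fsubsetP => b; rewrite mem_Sw => /andP [].
have mp : max_possible R m D (Sw w).
  split => //; split; first by exists w; exact: L2.
  move=> b bD bS w' w'S.
  have bSD : (b |` Sw w `<=` D)%fset by rewrite fsubUset fsub1set bD SD.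
  have := fsubset_leq_card (L1 w'S bSD).
  rewrite cardfsU1 bS !card_Sw /=.
  have := Emin_le (proj2 w'S); have := sc_ec w'; have := sc_ec w; lia.
split => // S' /L3; rewrite card_Sw; have := sc_ec w; lia.
Qed.

Lemma sem w : pmod w != 0 -> (in_semp_max R m D w <-> ec w = E).
Proof.
move=> pw; split.
  move=> [S [[[SD _] Smax] wS]].
  have [w1 [pw1 ew1]] := Emin_ex.
  have := Smax _ (L4 pw1 ew1).1; rewrite card_Sw.
  have := fsubset_leq_card (L1 wS SD); rewrite card_Sw.
  have := Emin_le pw; have := sc_ec w; have := sc_ec w1; lia.
by move=> ew; exists (Sw w); split; [exact: L4 | exact: L2].
Qed.

Lemma pset_eq (mu : R) w : Defs.pset mu D w = mu ^+ sc w * (1 - mu) ^+ ec w.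
Proof.
rewrite /Defs.pset /sc /ec /Defs.pform; elim: (enum_fset D) => [|b s IH].
  by rewrite big_nil /= !expr0 mulr1.
rewrite big_cons IH /=; case: (sat w b) => /=; rewrite ?add0n ?add1n !exprS; ring.
Qed.


Definition hE := (hornerM, hornerXn, horner_exp, hornerD, hornerN, hornerX, hornerC, hornerCM).
Definition gP w : {poly R} := 'X^(sc w) * (1 - 'X) ^+ (ec w - E).
Definition Np : {poly R} :=
  \sum_(w : model n) (if sat w a then 'X else 1 - 'X) * gP w * (pmod w)%:P.
Definition Dp : {poly R} := \sum_(w : model n) gP w * (pmod w)%:P.

Lemma pset_fac (mu : R) w :
  Defs.pset mu D w * pmod w = (1 - mu) ^+ E * (gP w).[mu] * pmod w.
Proof.
have [->|pw] := eqVneq (pmod w) 0; first by rewrite !mulr0.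
rewrite pset_eq.
have -> : ec w = (E + (ec w - E))%N by rewrite subnKC // Emin_le.
rewrite exprD /gP !hE; congr (_ * _); exact: mulrCA.
Qed.

Lemma pc_eq (mu : R) : mu != 1 -> pcond_mu m a D mu = Np.[mu] / Dp.[mu].
Proof.
move=> mu1; rewrite /pcond_mu /Np /Dp !horner_sum.
have e1 : \sum_w Defs.pform mu a w * Defs.pset mu D w * pmod w =
   (1 - mu) ^+ E * \sum_w ((if sat w a then 'X else 1 - 'X) * gP w * (pmod w)%:P).[mu].
  rewrite mulr_sumr; apply: eq_bigr => w _.
  rewrite -mulrA pset_fac /Defs.pform; case: ifP => _;
  move: (gP w) (pmod w) ((1 - mu) ^+ E) => G P C; rewrite !hE; ring.
have e2 : \sum_w Defs.pset mu D w * pmod w =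
   (1 - mu) ^+ E * \sum_w (gP w * (pmod w)%:P).[mu].
  rewrite mulr_sumr; apply: eq_bigr => w _.
  by rewrite pset_fac; move: (gP w) (pmod w) => G P; rewrite !hE mulrA.
rewrite e1 e2 invfM mulrACA mulfV ?mul1r // expf_neq0 // subr_eq0 eq_sym //.
Qed.

Lemma gP1 w : pmod w != 0 -> (gP w).[1] = (ec w == E)%:R.
Proof.
move=> pw; rewrite /gP !hE subrr expr1n mul1r expr0n subn_eq0.
by rewrite eqn_leq Emin_le // andbT.
Qed.

Lemma Dp1 : 0 < Dp.[1].
Proof.
have [w [pw ew]] := Emin_ex.
rewrite /Dp horner_sum (bigD1 w) //= hornerM hornerC gP1 // ew eqxx mul1r.
have : 0 <= \sum_(i | i != w) (gP i * (pmod i)%:P).[1].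
  apply: sumr_ge0 => i _; rewrite hornerM hornerC.
  have [->|pi] := eqVneq (pmod i) 0; first by rewrite mulr0.
  by rewrite gP1 // mulr_ge0 ?ler0n ?pmod_ge0.
have : 0 < pmod w by rewrite lt_neqAle eq_sym pw pmod_ge0.
move: (pmod w) (\sum_(i | i != w) _) => x y; lra.
Qed.

End Aux.

Arguments Np {R n K} m HK a D. Arguments Dp {R n K} m HK D.
Arguments Dp1 {R n K} m HK D. Arguments gP1 {R n K m} HK D {w}.
Arguments sem {R n K m} HK D {w}. Arguments E {R n K} m HK D.
Arguments pc_eq {R n K m} HK a D mu.

Local Open Scope classical_set_scope.

Theorem theorem4 (R : realType) (n K : nat) (m : 'I_K -> model n)
  (HK : (1 <= K)%N) (a : prop n) (D : {fset prop n}) :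
  pcond_mu m a D mu @[mu --> (1 : R)^'-] -->
    ((\sum_(w : model n | `[< in_semp_max R m D w /\
                             in_semp R m [fset a]%fset w >]) pmod R m w) /
     (\sum_(w : model n | `[< in_semp_max R m D w >]) pmod R m w)).
Proof.
have H1 : (Np m HK a D).[mu] / (Dp m HK D).[mu] @[mu --> (1 : R)] -->
          (Np m HK a D).[1] / (Dp m HK D).[1].
  have hD := lt0r_neq0 (Dp1 (R:=R) m HK D).
  exact: (cvgM (@continuous_horner R (Np m HK a D) 1) (cvgV hD (@continuous_horner R (Dp m HK D) 1))).
have H2 := cvg_at_left_filter H1.
have -> : (\sum_(w : model n | `[< in_semp_max R m D w /\
                             in_semp R m [fset a]%fset w >]) pmod R m w) =
          (Np m HK a D).[1].
  rewrite big_mkcond /Np horner_sum; apply: eq_bigr => w _.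
  rewrite hornerM hornerC hornerM.
  have [pw|pw] := eqVneq (pmod R m w) 0; first by rewrite pw mulr0; case: ifP.
  rewrite gP1 //.
  have ea : in_semp R m [fset a]%fset w <-> sat w a.
    split; first by move=> [h _]; apply: h; rewrite in_fset1.
    by move=> h; split => // b; rewrite in_fset1 => /eqP ->.
  have es := sem HK D pw.
  case: (boolP (sat w a)) => sa; case: (boolP (ec n D w == E m HK D)) => /eqP se;
    rewrite /= ?(hE, mulr0n, mulr1n, subrr, mul0r, mulr0, mul1r, mulr1).
  - by rewrite asboolT //; split; [apply/es | apply/ea].
  - by rewrite asboolF // => -[/es h _].
  - by rewrite asboolF // => -[_ /ea h]; rewrite h in sa.
  - by rewrite asboolF // => -[/es h _].
have -> : (\sum_(w : model n | `[< in_semp_max R m D w >]) pmod R m w) =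
          (Dp m HK D).[1].
  rewrite big_mkcond /Dp horner_sum; apply: eq_bigr => w _.
  rewrite hornerM hornerC.
  have [pw|pw] := eqVneq (pmod R m w) 0; first by rewrite pw mulr0; case: ifP.
  rewrite gP1 //.
  have es := sem HK D pw.
  case: (boolP (ec n D w == E m HK D)) => /eqP se.
  - by rewrite asboolT /= ?mulr1n ?mul1r //; apply/es.
  - by rewrite asboolF /= ?mulr0n ?mul0r // => /es.
apply: cvg_trans H2; apply: near_eq_cvg; near=> mu.
rewrite pc_eq //; near: mu; exact: nbhs_left_neq.
Unshelve. all: by end_near.
Qed.
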